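(* For every nonzero $a\in\mathcal F^0(\mathbb Z,\bar K)$ there exists an integer $m_a>0$, depending only on $a$, such that every function $f:\mathbb Z\to\bar K$ with $f*a=0$ is $m_a$-periodic. Consequently $\ker(\Delta_a)$ is contained in the space of $m_a\mathbb Z$-periodic functions on $\mathbb Z$ and is finite dimensional.
   Context: $K=\mathrm{GF}(p^r)$, $\bar K$ an algebraic closure. $\mathcal F^0(\mathbb Z,\bar K)$ is the space of finitely supported functions $\mathbb Z\to\bar K$; $(f*a)(n)=\sum_{k}f(k)a(n-k)$; $\Delta_af=f*a$ on all functions $\mathbb Z\to\bar K$. *)

(* Defs.v *)
From HB Require Import structures.
From mathcomp Require Import all_boot all_order all_algebra.
Set Implicit Arguments. Unset Strict Implicit. Unset Printing Implicit Defensive.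
Import Order.TTheory GRing.Theory Num.Theory.
Local Open Scope ring_scope.

(* L is an algebraic closure of the finite field K (K = GF(p^r)) via iota:
   L is algebraically closed and every element of L is algebraic over iota(K). *)
Definition is_alg_closure_of (K : finFieldType) (L : closedFieldType)
  (iota : {rmorphism K -> L}) : Prop :=
  forall x : L, exists q : {poly K}, q != 0 /\ root (map_poly iota q) x.

Definition supp_in (L : nzRingType) (N : nat) (a : int -> L) : Prop :=
  forall j : int, (N < `|j|)%N -> a j = 0.

(* convolution (f * a)(n) = sum_k f(k) a(n-k) = sum_{j} f(n-j) a(j),
   computed for a supported in [-N, N] (then independent of N). *)
Definition conv (L : nzRingType) (N : nat) (f a : int -> L) (n : int) : L :=
  \sum_(i < (N + N).+1) f (n - (i%:Z - N%:Z)) * a (i%:Z - N%:Z).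

Definition in_ker_Delta (L : nzRingType) (N : nat) (a f : int -> L) : Prop :=
  forall n : int, conv N f a n = 0.

Definition periodic (L : Type) (m : nat) (f : int -> L) : Prop :=
  forall n : int, f (n + m%:Z) = f n.

(* Main.v *)
Require Import Defs.
From Stdlib Require Import Classical.
From mathcomp Require Import zify.
From HB Require Import structures.
From mathcomp Require Import all_boot all_order all_algebra all_field.
Import Order.TTheory GRing.Theory Num.Theory.
Set Implicit Arguments. Unset Strict Implicit. Unset Printing Implicit Defensive.
Local Open Scope ring_scope.

Lemma pigeon (T : finType) (g : nat -> T) : exists i j, (i < j)%N /\ g i = g j.
Proof.
set s := map g (iota 0 #|T|.+1).
have nu : ~~ uniq s.
  apply/negP => us.
  have := uniq_leq_size us (fun x _ => mem_enum T x).
  by rewrite size_map size_iota -cardE ltnn.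
have /(uniqPn (g 0%N)) [i [j [ij js e]]] := nu.
move: js; rewrite size_map size_iota => js.
exists i, j; split => //.
by move: e; rewrite !(nth_map 0%N) ?size_iota ?(ltn_trans ij) // !nth_iota ?(ltn_trans ij).
Qed.

Definition code (L : eqType) (rs : seq L) (x : L) : 'I_(size rs).+1 := inord (index x rs).

Lemma code_inj (L : eqType) (rs : seq L) x y : x \in rs -> y \in rs -> code rs x = code rs y -> x = y.
Proof.
move=> xr yr /(congr1 val) /=; rewrite /code !inordK ?ltnS ?index_size // => e.
by rewrite -(nth_index x xr) e nth_index.
Qed.

Lemma roots_fin (L : closedFieldType) (P : {poly L}) : P != 0 ->
  exists rs : seq L, forall x, root P x -> x \in rs.
Proof.
move=> P0; have [rs Prs] := closed_field_poly_normal P.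
exists rs => x; rewrite {1}Prs rootZ ?lead_coef_eq0 //.
by rewrite root_prod_XsubC.
Qed.

Section Frob.
Variables (L : fieldType) (p : nat) (pL : p \in [pchar L]).
Definition fr (e : nat) (x : L) := x ^+ (p ^ e).

Lemma frD e x y : fr e (x + y) = fr e x + fr e y.
Proof.
rewrite /fr; elim: e => [|e IH]; first by rewrite !expn0 !expr1.
by rewrite expnSr !exprM IH -!(pFrobenius_autE pL) rmorphD.
Qed.
Lemma frM e x y : fr e (x * y) = fr e x * fr e y.
Proof. by rewrite /fr exprMn. Qed.
Lemma fr0 e : fr e 0 = 0.
Proof.
have p0 : (0 < p ^ e)%N by rewrite expn_gt0 prime_gt0 // (pcharf_prime pL).
by rewrite /fr expr0n eqn0Ngt p0.
Qed.
Lemma fr1 e : fr e 1 = 1.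
Proof. by rewrite /fr expr1n. Qed.
Lemma frN e x : fr e (- x) = - fr e x.
Proof. by apply/eqP; rewrite -subr_eq0 opprK -frD addNr fr0. Qed.
Lemma frB e x y : fr e (x - y) = fr e x - fr e y.
Proof. by rewrite frD frN. Qed.
Lemma fr_inj e x y : fr e x = fr e y -> x = y.
Proof.
move=> /eqP; rewrite -subr_eq0 -frB /fr expf_eq0 subr_eq0 => /andP[_ /eqP] //.
Qed.
Lemma fr_add e1 e2 x : fr (e1 + e2) x = fr e1 (fr e2 x).
Proof. by rewrite /fr -exprM expnD mulnC. Qed.
Lemma fr_mul e k x : fr e x = x -> fr (e * k) x = x.
Proof.
move=> h; elim: k => [|k IH]; first by rewrite muln0 /fr expn0 expr1.
by rewrite mulnS fr_add IH h.
Qed.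
Lemma frV e x : fr e (x^-1) = (fr e x)^-1.
Proof. by rewrite /fr exprVn. Qed.
Lemma fr_sum e I (r : seq I) P (F : I -> L) :
  fr e (\sum_(i <- r | P i) F i) = \sum_(i <- r | P i) fr e (F i).
Proof. exact: (big_morph (fr e) (frD e) (fr0 e)). Qed.
Lemma fr_nat e n : fr e n%:R = n%:R.
Proof. by elim: n => [|n IH]; rewrite ?fr0 // -addn1 natrD frD IH fr1. Qed.
End Frob.


Lemma alg_fix (K : finFieldType) (L : closedFieldType) (iota : {rmorphism K -> L})
  p (pL : p \in [pchar L]) n0 (hK : #|K| = (p ^ n0)%N) x
  (hx : exists q : {poly K}, q != 0 /\ root (map_poly iota q) x) :
  exists e, (0 < e)%N /\ fr p e x = x.
Proof.
have n0p : (0 < n0)%N.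
  case: n0 hK => // /eqP; rewrite expn0 => /eqP h.
  by have := finNzRing_gt1 K; rewrite h.
have fixK k c : fr p (n0 * k) (iota c) = iota c.
  apply: fr_mul.
  by rewrite /fr -hK -rmorphXn expf_card.
case: hx => q [q0 rq].
set P := map_poly iota q.
have hP k y : fr p (n0 * k) P.[y] = P.[fr p (n0 * k) y].
  rewrite !horner_coef fr_sum //; apply: eq_bigr => i _.
  rewrite frM // coef_map /= fixK; congr (_ * _).
  by rewrite /fr exprAC.
have P0 : P != 0 by rewrite map_poly_eq0.
have [rs hrs] := roots_fin P0.
have inr k : fr p (n0 * k) x \in rs.
  apply: hrs; rewrite /root -hP (eqP rq) fr0 //.
have [i [j [ij e]]] := pigeon (fun k => code rs (fr p (n0 * k) x)).
have {}e := code_inj (inr i) (inr j) e.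
exists (n0 * (j - i))%N; split; first by rewrite muln_gt0 n0p subn_gt0.
apply: (@fr_inj _ _ pL (n0 * i)).
by rewrite -fr_add -mulnDr subnKC ?(ltnW ij).
Qed.

Lemma common_fix (L : fieldType) p (pL : p \in [pchar L]) (xs : seq L) :
  (forall x, x \in xs -> exists e, (0 < e)%N /\ fr p e x = x) ->
  exists E, (0 < E)%N /\ forall x, x \in xs -> fr p E x = x.
Proof.
elim: xs => [|y xs IH] h; first by exists 1%N.
have [E [E0 hE]] : exists E, (0 < E)%N /\ forall x, x \in xs -> fr p E x = x.
  by apply: IH => x xi; apply: h; rewrite inE xi orbT.
have [e [e0 he]] := h y (mem_head _ _).
exists (E * e)%N; split; first by rewrite muln_gt0 E0.
move=> x; rewrite inE => /orP[/eqP ->|xi].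
  by rewrite mulnC; apply: fr_mul.
by apply: fr_mul => //; apply: hE.
Qed.


Section Rec.
Variables (L : fieldType) (N : nat) (a : int -> L) (l : nat).
Hypothesis hl : (l <= N + N)%N.
Hypothesis al : a (l%:Z - N%:Z) != 0.
Hypothesis lmin : forall i, (i < l)%N -> a (i%:Z - N%:Z) = 0.

Definition T := (N + N - l)%N.
Definition bb t := a ((l + t)%:Z - N%:Z).
Definition cc t := - bb t.+1 / bb 0.

Lemma conv_rec f n : conv N f a n = \sum_(t < T.+1) f (n + N%:Z - (l + t)%:Z) * bb t.
Proof.
rewrite /conv -(big_mkord xpredT (fun i => f (n - (i%:Z - N%:Z)) * a (i%:Z - N%:Z))).
rewrite (@big_cat_nat _ _ _ l) ?leqW //=.
rewrite big_nat_cond big1 ?add0r; last first.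
  by move=> i /andP[/andP[_ il] _]; rewrite lmin // mulr0.
rewrite (big_addn 0 _ l) /T subSn // big_mkord.
apply: eq_bigr => i _; rewrite /bb addnC; congr (f _ * a _); lia.
Qed.

Lemma rec f : in_ker_Delta N a f ->
  forall u, f u = \sum_(t < T) f (u - 1 - t%:Z) * cc t.
Proof.
move=> hf u; have := hf (u - N%:Z + l%:Z); rewrite conv_rec big_ord_recl /=.
have -> : u - N%:Z + l%:Z + N%:Z - (l + 0)%:Z = u by lia.
have b0 : bb 0 != 0 by rewrite /bb addn0.
under eq_bigr => t _ do have -> : u - N%:Z + l%:Z + N%:Z - (l + bump 0 t)%:Z = u - 1 - t%:Z by rewrite /bump; lia.
move=> /eqP; rewrite addr_eq0 => /eqP h.
have -> : \sum_(t < T) f (u - 1 - t%:Z) * cc t = - (\sum_(t < T) f (u - 1 - t%:Z) * bb t.+1) / bb 0.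
  rewrite mulNr mulr_suml -sumrN; apply: eq_bigr => t _.
  by rewrite /cc mulNr mulrN mulrA.
by rewrite -h mulfK.
Qed.

Definition Sw (f : int -> L) (k : int) : 'rV[L]_T := \row_(i < T) f (k - 1 - i%:Z).
Definition MM : 'M[L]_T := \matrix_(i < T, j < T) (if (j == 0 :> nat) then cc i else ((i.+1 == j)%:R)).
Definition Mp k := iter k (fun A => A *m MM) 1%:M.

Lemma rec2 f : in_ker_Delta N a f -> forall u, f u = \sum_(t < T) Sw f u 0 t * cc t.
Proof. by move=> hf u; rewrite (rec hf u); apply: eq_bigr => t _; rewrite mxE. Qed.

Lemma step f : in_ker_Delta N a f -> forall k, Sw f (k + 1) = Sw f k *m MM.
Proof.
move=> hf k; apply/rowP => j; rewrite !mxE.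
case: j => [[|j] jT] /=.
  under eq_bigr => i _ do rewrite mxE.
  have -> : k + 1 - 1 - 0%:Z = k by lia.
  apply: etrans (rec2 hf k) _.
  by apply: eq_bigr => i _; rewrite !mxE.
have jT' : (j < T)%N by apply: ltnW.
rewrite (bigD1 (Ordinal jT')) //= big1 ?addr0.
  rewrite !mxE /= eqxx mulr1; congr f; lia.
move=> i ne; rewrite !mxE /=.
have -> : (i.+1 == j.+1) = false.
  by rewrite eqSS; apply/negbTE; apply: contra ne => /eqP e; apply/eqP/val_inj.
by rewrite mulr0.
Qed.

Lemma pow f : in_ker_Delta N a f -> forall b (k : nat), Sw f (b + k%:Z) = Sw f b *m Mp k.
Proof.
move=> hf b; elim => [|k IH]; first by rewrite addr0 /Mp /= mulmx1.
have -> : b + k.+1%:Z = (b + k%:Z) + 1 by lia.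
by rewrite step // IH /Mp /= mulmxA.
Qed.

Lemma per_of (i j : nat) f : (i < j)%N -> Mp i = Mp j -> in_ker_Delta N a f ->
  periodic (j - i) f.
Proof.
move=> ij e hf n.
rewrite (rec2 hf n) (rec2 hf (n + _)).
have -> : n = (n - i%:Z) + i%:Z by lia.
have -> : n - i%:Z + i%:Z + (j - i)%N%:Z = (n - i%:Z) + j%:Z by lia.
by rewrite !pow // e.
Qed.

End Rec.


Lemma per_nat (L : Type) m (h : int -> L) : periodic m h ->
  forall x (k : nat), h (x + (k * m)%N%:Z) = h x.
Proof.
move=> hp x; elim => [|k IH]; first by rewrite mul0n addr0.
have -> : x + (k.+1 * m)%N%:Z = (x + (k * m)%N%:Z) + m%:Z by lia.
by rewrite hp.
Qed.

Lemma per_zero (L : nzRingType) m (h : int -> L) : (0 < m)%N -> periodic m h ->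
  (forall k : nat, (k < m)%N -> h k%:Z = 0) -> forall n, h n = 0.
Proof.
move=> m0 hp hz n.
have mz : m%:Z != 0 by lia.
have r0 := modz_ge0 n mz.
have rm : (n %% m%:Z)%Z < m%:Z by apply: ltz_pmod; lia.
have e := divz_eq n m%:Z.
case: (n %% m%:Z)%Z r0 rm e => [r|r] //= _ rm e.
have rm' : (r < m)%N by lia.
case: (n %/ m%:Z)%Z e => [q|q] e.
  have -> : n = r%:Z + (q * m)%N%:Z by lia.
  by rewrite per_nat // hz.
rewrite -(per_nat hp n q.+1).
have -> : n + (q.+1 * m)%N%:Z = r%:Z by lia.
by rewrite hz.
Qed.

Section Span.
Variables (L : fieldType) (ker : (int -> L) -> Prop) (m : nat).
Hypothesis m0 : (0 < m)%N.
Hypothesis kper : forall f, ker f -> periodic m f.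

Definition wv (f : int -> L) : 'rV[L]_m := \row_(k < m) f k%:Z.
Definition Bm d (g : 'I_d -> int -> L) : 'M[L]_(d, m) := \matrix_(i < d, k < m) g i k%:Z.

Lemma span_claim r : forall d (g : 'I_d -> int -> L), (forall i, ker (g i)) ->
  (m - \rank (Bm g) <= r)%N ->
  exists d' (g' : 'I_d' -> int -> L), (forall i, ker (g' i)) /\
     forall f, ker f -> (wv f <= Bm g')%MS.
Proof.
elim: r => [|r IH]; move=> d g kg hr.
  exists d, g; split => // f _; apply: submx_full.
  rewrite /row_full eqn_leq rank_leq_col /=; lia.
case: (classic (forall f, ker f -> (wv f <= Bm g)%MS)) => [H|H].
  by exists d, g.
have [f Hf] := not_all_ex_not _ _ H.
have [kf nf] := imply_to_and _ _ Hf.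
pose g' := fun i : 'I_d.+1 => if unlift ord_max i is Some i' then g i' else f.
have kg' : forall i, ker (g' i).
  by move=> i; rewrite /g'; case: (unlift ord_max i).
apply: (IH d.+1 g' kg').
have rowl i : row (lift ord_max i) (Bm g') = row i (Bm g).
  by apply/rowP => k; rewrite !mxE /g' liftK.
have rowm : row ord_max (Bm g') = wv f.
  by apply/rowP => k; rewrite !mxE /g' unlift_none.
have lt : (Bm g < Bm g')%MS.
  rewrite ltmxE; apply/andP; split.
    by apply/row_subP => i; rewrite -rowl row_sub.
  apply/negP => sub; apply: nf.
  by rewrite -rowm; apply: submx_trans sub; apply: row_sub.
have := rank_ltmx lt; have := rank_leq_col (Bm g'); lia.
Qed.

Hypothesis k0 : ker (fun _ => 0).
Hypothesis ksub : forall f g, ker f -> ker g -> ker (fun x => f x - g x).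
Hypothesis klin : forall d (g : 'I_d -> int -> L) (c : 'I_d -> L),
  (forall i, ker (g i)) -> ker (fun x => \sum_(i < d) c i * g i x).

Lemma span_exists : exists d (g : 'I_d -> int -> L), (forall i, ker (g i)) /\
  forall f, ker f -> exists c : 'I_d -> L, forall n, f n = \sum_(i < d) c i * g i n.
Proof.
have [d [g [kg hg]]] := @span_claim m 0 (fun _ _ => 0) (fun _ => k0) (leq_subr _ _).
exists d, g; split => // f kf.
have /submxP [D e] := hg f kf.
exists (fun i => D 0 i) => n.
pose h := fun x => f x - \sum_(i < d) D 0 i * g i x.
have kh : ker h by apply: ksub => //; apply: klin.
suff : h n = 0 by move/eqP; rewrite subr_eq0 => /eqP.
apply: (per_zero m0 (kper kh)) => k km.
have := congr1 (fun M : 'rV_m => M 0 (Ordinal km)) e.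
rewrite /h !mxE => ->; apply/eqP; rewrite subr_eq0; apply/eqP; apply: eq_bigr => i _.
by rewrite ?mxE.
Qed.
End Span.

Lemma conv_sub (L : nzRingType) N (a f g : int -> L) n :
  conv N (fun x => f x - g x) a n = conv N f a n - conv N g a n.
Proof. by rewrite /conv -sumrB; apply: eq_bigr => i _; rewrite mulrBl. Qed.

Lemma conv_lin (L : comNzRingType) N (a : int -> L) d (g : 'I_d -> int -> L) c n :
  conv N (fun x => \sum_(i < d) c i * g i x) a n = \sum_(i < d) c i * conv N (g i) a n.
Proof.
rewrite /conv; under eq_bigr => k _ do rewrite mulr_suml.
rewrite exchange_big; apply: eq_bigr => i _; rewrite mulr_sumr.
by apply: eq_bigr => k _; rewrite mulrA.
Qed.

Lemma conv_zero (L : nzRingType) N (a : int -> L) n : conv N (fun _ => 0) a n = 0.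
Proof. by rewrite /conv big1 // => i _; rewrite mul0r. Qed.


Theorem lemma5p6 (K : finFieldType) (L : closedFieldType)
  (iota : {rmorphism K -> L}) (Halg : is_alg_closure_of iota)
  (N : nat) (a : int -> L) (Ha : supp_in N a) (Hnz : exists j, a j != 0) :
  exists m : nat, (0 < m)%N /\
    (forall f : int -> L, in_ker_Delta N a f -> periodic m f) /\
    (exists (d : nat) (g : 'I_d -> int -> L),
        (forall i, in_ker_Delta N a (g i)) /\
        forall f : int -> L, in_ker_Delta N a f ->
          exists c : 'I_d -> L, forall n : int, f n = \sum_(i < d) c i * g i n).
Proof.
have [p pr pK] := finPcharP K.
have pL : p \in [pchar L] := rmorph_pchar iota pK.
have hK : #|K| = (p ^ logn p #|K|)%N := card_pprimeChar pK.
pose P := fun i : nat => a (i%:Z - N%:Z) != 0.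
have exP : exists i, P i.
  case: Hnz => j aj; exists (absz (j + N%:Z)); rewrite /P.
  have : ~~ (N < `|j|)%N by apply: contra aj => h; rewrite Ha.
  by move=> h; have -> : (absz (j + N%:Z))%:Z - N%:Z = j by lia.
case: (ex_minnP exP) => l al lmin.
have lmin' : forall i, (i < l)%N -> a (i%:Z - N%:Z) = 0.
  by move=> i il; apply/eqP; apply: contraTT il => h; rewrite -leqNgt lmin.
have hl : (l <= N + N)%N.
  rewrite leqNgt; apply/negP => h.
  have : a (l%:Z - N%:Z) = 0 by apply: Ha; lia.
  by move=> e; move: al; rewrite /P e eqxx.
set xs := [seq a (i%:Z - N%:Z) | i <- seq.iota 0 (N + N).+1].
have [E [E0 hE]] : exists E, (0 < E)%N /\ forall x, x \in xs -> fr p E x = x.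
  apply: common_fix => //.
  move=> x _; apply: (alg_fix pL hK); exact: Halg.
have fixa i : (i <= N + N)%N -> fr p E (a (i%:Z - N%:Z)) = a (i%:Z - N%:Z).
  by move=> iN; apply: hE; apply: map_f; rewrite mem_iota.
have fixc t : (t < T N l)%N -> fr p E (cc N a l t) = cc N a l t.
  move=> tT; rewrite /cc /bb frM frN // frV fixa; last by rewrite /T in tT; lia.
  by rewrite addn0 fixa.
have fixM i j : fr p E (MM N a l i j) = MM N a l i j.
  rewrite /MM mxE; case: eqP => _; first by apply: fixc.
  by apply: fr_nat.
have fixMp k i j : fr p E (Mp N a l k i j) = Mp N a l k i j.
  elim: k i j => [|k IH] i j.
    by rewrite /Mp /= mxE; case: eqP => _; rewrite ?fr0 ?fr1.
  rewrite /Mp /= mxE fr_sum //; apply: eq_bigr => k' _.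
  by rewrite frM -/(Mp N a l k) IH fixM.
set Q := (p ^ E)%N.
have Q1 : (1 < Q)%N by rewrite /Q -(expn0 p) ltn_exp2l ?prime_gt1.
have P0 : ('X^Q - 'X : {poly L}) != 0.
  apply/eqP => /(congr1 (fun q : {poly L} => q`_Q)).
  rewrite coefB coefXn coefX coef0 eqxx (gtn_eqF Q1) subr0 => /eqP.
  by rewrite oner_eq0.
have [rs hrs] := roots_fin P0.
have inrs k i j : Mp N a l k i j \in rs.
  apply: hrs; rewrite /root !hornerE -/(fr p E _) fixMp subrr //.
have [i [j [ij e]]] := pigeon (fun k => [ffun ij : 'I_(T N l) * 'I_(T N l) =>
      code rs (Mp N a l k ij.1 ij.2)]).
have eM : Mp N a l i = Mp N a l j.
  apply/matrixP => i' j'.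
  move/ffunP: e => /(_ (i', j')); rewrite !ffunE /=.
  by apply: code_inj.
have kper : forall f, in_ker_Delta N a f -> periodic (j - i) f.
  by move=> f kf; apply: (per_of hl al lmin' ij eM kf).
exists (j - i)%N; split; first by rewrite subn_gt0.
split => //.
apply: (span_exists (ker := in_ker_Delta N a) (m := (j - i)%N)).
- by rewrite subn_gt0.
- exact: kper.
- by move=> n; rewrite conv_zero.
- by move=> f g kf kg n; rewrite conv_sub kf kg subrr.
- move=> d g c kg n; rewrite conv_lin big1 // => i' _.
  by rewrite kg mulr0.
Qed.
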